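(* Let $f:\mathbb{R}^n\to\mathbb{R}^n$ be locally Lipschitz, and let $V_1,V_2\in C^1(\mathbb{R}^n)$, continuous $N_1,N_2:\mathbb{R}^n\to[0,\infty)$, and continuous $h:[0,\infty)\to[0,\infty)$ with $h(0)=0$ and $\sup_{r>0}h(r)/r<\infty$ satisfy $\nabla V_1\cdot f\le -N_1$ and $\nabla V_2\cdot f\le -N_2+h(N_1)$ on $\mathbb{R}^n$. Assume every solution is defined and bounded on $[0,\infty)$ and that along every solution the maps $t\mapsto N_i(x(t))$ are uniformly continuous. If $E:=\{x:N_1(x)=0,\ N_2(x)=0\}=\{x^\ast\}$ is a singleton, then $x^\ast$ is a globally asymptotically stable equilibrium of $\dot x=f(x)$.
   Context: $x^\ast$ is globally asymptotically stable if it is Lyapunov stable (for every neighborhood $U$ of $x^\ast$ there is a neighborhood $V\subset U$ such that solutions starting in $V$ remain in $U$ for all $t\ge0$) and every solution satisfies $x(t)\to x^\ast$ as $t\to\infty$. *)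

(* Defs.v *)
(* R : realType, R^n rendered as 'rV[R]_n (max norm). *)
From HB Require Import structures.
From mathcomp Require Import all_boot all_order all_algebra.
From mathcomp Require Import all_classical all_reals all_analysis.
Set Implicit Arguments. Unset Strict Implicit. Unset Printing Implicit Defensive.
Import Order.TTheory GRing.Theory Num.Theory.
Import numFieldNormedType.Exports.
Local Open Scope classical_set_scope.
Local Open Scope ring_scope.

Section Defs.
Context {R : realType} {n : nat}.
Local Notation V := 'rV[R]_n.

Definition locally_lipschitz (f : V -> V) : Prop :=
  forall x : V, exists r : R, 0 < r /\ exists K : R,
    forall y z : V, ball x r y -> ball x r z -> `|f y - f z| <= K * `|y - z|.

Definition C1 (W : V -> R) : Prop :=
  (forall x : V, differentiable W x) /\
  (forall v : V, continuous (fun x : V => 'd W x v)).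

Definition is_solution (f : V -> V) (x : R -> V) : Prop :=
  {within `[0, +oo[, continuous x} /\
  (forall t : R, 0 < t -> is_derive t 1 x (f (x t))).

Definition bounded_on_pos (x : R -> V) : Prop :=
  exists M : R, forall t : R, 0 <= t -> `|x t| <= M.

Definition unif_cont_on_pos (g : R -> R) : Prop :=
  forall e : R, 0 < e -> exists d : R, 0 < d /\
    forall s t : R, 0 <= s -> 0 <= t -> `|s - t| < d -> `|g s - g t| < e.

Definition lyapunov_stable (f : V -> V) (xs : V) : Prop :=
  forall U : set V, U \in nbhs xs -> exists2 W : set V, W \in nbhs xs & W `<=` U /\
    forall x : R -> V, is_solution f x -> W (x 0) -> forall t : R, 0 <= t -> U (x t).

Definition globally_asymptotically_stable (f : V -> V) (xs : V) : Prop :=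
  lyapunov_stable f xs /\
  forall x : R -> V, is_solution f x -> x @ +oo --> xs.

End Defs.

(* Main.v *)
Require Import Defs.
From HB Require Import structures.
From mathcomp Require Import all_boot all_order all_algebra.
From mathcomp Require Import all_classical all_reals all_analysis.
From mathcomp Require Import ring lra.
Import Order.TTheory GRing.Theory Num.Theory.
Import numFieldNormedType.Exports.
Local Open Scope classical_set_scope.
Local Open Scope ring_scope.
Set Implicit Arguments. Unset Strict Implicit. Unset Printing Implicit Defensive.

Section Gen.
Variables (R : realType) (n : nat).
Local Notation V := 'rV[R]_n.

Lemma norm_sub_cont (c : V) : continuous (fun y : V => `|y - c|).
Proof.
move=> y; apply: (@continuous_comp _ _ _ (fun y : V => y - c) (@Num.norm _ V)); last exact: norm_continuous.
apply: (@continuousB _ _ _ id (cst c) y); [exact: cvg_id| exact: cst_continuous].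
Qed.

Lemma closed_normP (c : V) (P : set R) : closed P -> closed [set y : V | P `|y - c|].
Proof. by move=> cP; exact: ((continuous_closedP _).1 (@norm_sub_cont c) P cP). Qed.

Lemma cpt (A : set V) (M : R) : closed A -> (forall y, A y -> `|y| <= M) -> compact A.
Proof.
move=> cA AM; apply: bounded_closed_compact => //.
exists M; split; first exact: num_real.
move=> r Mr y Ay; apply: le_trans (AM _ Ay) _; exact: ltW.
Qed.

Lemma pos_min (K : set V) (h : V -> R) : compact K -> continuous h ->
  (forall y, K y -> 0 < h y) -> exists2 m, 0 < m & forall y, K y -> m <= h y.
Proof.
move=> cK hc hp.
have ci : compact (h @` K) by apply: continuous_compact => //; exact: continuous_subspaceT.
have cl : closed (h @` K) by apply: compact_closed => //; exact: hausdorff_space.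
have op : open (~` (h @` K)) by rewrite openC.
have h0 : (~` (h @` K)) 0.
  by move=> [y Ky hy0]; have := hp _ Ky; rewrite hy0 ltxx.
have := op _ h0; rewrite /= -nbhs_ballE => -[e /= e0 eK].
exists e => // y Ky.
rewrite leNgt; apply/negP => hye.
apply: (eK (h y)); last by exists y.
rewrite /ball /= sub0r normrN ger0_norm //; exact: ltW (hp _ Ky).
Qed.

Lemma bnd_below (K : set V) (h : V -> R) : compact K -> continuous h ->
  exists B, forall y, K y -> B <= h y.
Proof.
move=> cK hc.
have ci : compact (h @` K) by apply: continuous_compact => //; exact: continuous_subspaceT.
have [M [_ HM]] := compact_bounded ci.
exists (- (`|M| + 1)) => y Ky.
have Mlt : M < `|M| + 1 by apply: (le_lt_trans (ler_norm M)); rewrite ltrDl.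
have := HM (`|M| + 1) Mlt (h y) (ex_intro2 _ _ y Ky erefl).
move=> /= H; by move: H; rewrite ler_norml => /andP[].
Qed.

Lemma ballN (c y : V) e : ball c e y <-> `|c - y| < e.
Proof. by rewrite -ball_normE. Qed.

Lemma comp_derive (W : V -> R) (x : R -> V) t y :
  differentiable W (x t) -> is_derive t 1 x y ->
  is_derive t (1 : R) (W \o x) ('d W (x t) y).
Proof.
move=> dW dx.
have dxd : differentiable x t by apply/derivable1_diffP; exact: ex_derive.
have dc : differentiable (W \o x) t := differentiable_comp dxd dW.
apply: DeriveDef; first exact: diff_derivable.
rewrite deriveE // diff_comp //=; congr ('d W (x t) _); rewrite -deriveE //; exact: derive_val.
Qed.
End Gen.

Section Main.
Variables (R : realType) (n : nat) (f : 'rV[R]_n -> 'rV[R]_n) (W g : 'rV[R]_n -> R) (xs : 'rV[R]_n).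
Local Notation V := 'rV[R]_n.
Hypothesis Wd : forall y, differentiable W y.
Hypothesis gc : continuous g.
Hypothesis g0 : forall y, 0 <= g y.
Hypothesis Wdec : forall y, 'd W y (f y) <= - g y.
Hypothesis ex : forall x0, exists x : R -> V, is_solution f x /\ x 0 = x0.
Hypothesis bnd : forall x, is_solution f x -> bounded_on_pos x.
Hypothesis uc : forall x, is_solution f x -> unif_cont_on_pos (fun t => g (x t)).
Hypothesis gE : forall y, g y = 0 -> y = xs.

Lemma Wc : continuous W.
Proof. by move=> y; apply: differentiable_continuous. Qed.

Lemma mvt x : is_solution f x -> forall a b, 0 <= a -> a < b ->
  exists2 c, a < c < b & W (x b) - W (x a) <= - g (x c) * (b - a).
Proof.
move=> [xc xd] a b a0 ab.
have [||c cab ->] := @MVT R (W \o x) (fun c => 'd W (x c) (f (x c))) a b ab.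
- move=> c; rewrite in_itv /= => /andP[ac cb].
  apply: comp_derive; first exact: Wd.
  by apply: xd; exact: le_lt_trans a0 ac.
- apply: (@continuous_subspaceW _ _ `[a, b] `[0, +oo[).
    move=> t /=; rewrite !in_itv /= => /andP[hat _]; rewrite andbT.
    exact: le_trans a0 hat.
  move=> t; apply: (@continuous_comp _ _ _ (x : subspace `[0, +oo[ -> V) W t); [exact: xc | exact: Wc].
exists c; first by move: cab; rewrite in_itv.
apply: ler_wpM2r; first by rewrite subr_ge0 ltW.
exact: Wdec.
Qed.

Lemma noninc x : is_solution f x -> forall a b, 0 <= a -> a <= b -> W (x b) <= W (x a).
Proof.
move=> sx a b a0; rewrite le_eqVlt => /orP[/eqP->//|ab].
have [c _ H] := mvt sx a0 ab.
rewrite -subr_le0; apply: le_trans H _.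
rewrite mulNr oppr_le0; apply: mulr_ge0 => //; by rewrite subr_ge0 ltW.
Qed.


Lemma gsmall x : is_solution f x -> forall e, 0 < e ->
  exists T, forall t, T <= t -> g (x t) < e.
Proof.
move=> sx e e0.
have [//|H] := pselect (exists T, forall t, T <= t -> g (x t) < e).
have H' : forall T, exists t, T <= t /\ e <= g (x t).
  move=> T; apply: contrapT => nt; apply: H; exists T => t Tt.
  rewrite ltNge; apply/negP => et; apply: nt; by exists t.
have [Mx HMx] := bnd sx.
have cK0 : compact [set y : V | `|y - 0| <= Mx].
  apply: (@cpt _ _ _ Mx); first exact: closed_normP (@closed_le _ Mx).
  by move=> y /=; rewrite subr0.
have [B HB] := bnd_below cK0 Wc.
have [d [d0 Hd]] := @uc x sx (e / 2) (divr_gt0 e0 (ltr0Sn _ 1)).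
pose S := [set r | exists t, 0 <= t /\ r = W (x t)].
have Sinf : has_inf S.
  split; first by exists (W (x 0)), 0.
  exists B => r [t [t0 ->]]; apply: HB => /=; rewrite subr0; exact: HMx.
pose eta := e * d / 4.
have eta0 : 0 < eta by rewrite /eta !divr_gt0 ?mulr_gt0.
have [r [T0 [T00 ->]] HT0] := inf_adherent eta0 Sinf.
have [t [T0t et]] := H' T0.
have t0 : 0 <= t by exact: le_trans T00 T0t.
have tt : t < t + d / 2 by rewrite ltrDl divr_gt0.
have [c /andP[tc ct] Hc] := mvt sx t0 tt.
have gc2 : e / 2 < g (x c).
  have : `|g (x c) - g (x t)| < e / 2.
    apply: Hd; [exact: le_trans t0 (ltW tc) | exact: t0 |].
    rewrite gtr0_norm ?subr_gt0 //; rewrite ltrBlDl; apply: lt_le_trans ct _.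
    by rewrite lerD2l ler_pdivrMr // ler_pMr // ler1n.
  rewrite ltr_norml => /andP[h1 _]; move: h1 et. lra.
have Hinf : inf S <= W (x (t + d / 2)).
  apply: ge_inf; first by case: Sinf.
  exists (t + d / 2); split => //; exact: le_trans t0 (ltW tt).
have HW : W (x t) <= W (x T0) := noninc sx T00 T0t.
have : e / 2 * (d / 2) <= g (x c) * (d / 2).
  by rewrite ler_pM2r ?divr_gt0 // ltW.
move: Hc; rewrite addrAC subrr add0r => Hc.
rewrite /eta in HT0 *; move=> Hp; exfalso.
have : e * d / 4 = e / 2 * (d / 2) by field.
move: Hinf HW Hc HT0 Hp. lra.
Qed.


Lemma conv x : is_solution f x -> x @ +oo --> xs.
Proof.
move=> sx; apply/cvgrPdist_lt => eps eps0.
have [Mx HMx] := bnd sx.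
pose K := [set y : V | `|y - 0| <= Mx] `&` [set y : V | eps <= `|y - xs|].
have cK : compact K.
  apply: (@cpt _ _ _ Mx).
    apply: closedI; [exact: closed_normP (@closed_le _ Mx)| exact: closed_normP (@closed_ge _ eps)].
  by move=> y [/=]; rewrite subr0.
have [m m0 Hm] : exists2 m, 0 < m & forall y, K y -> m <= g y.
  apply: pos_min => // y [_ /= ey].
  rewrite lt_neqAle g0 andbT; apply/negP => /eqP/esym/gE yxs.
  by move: ey; rewrite yxs subrr normr0 leNgt eps0.
have [T HT] := gsmall sx m0.
exists (Num.max T 0); split; first exact: num_real.
move=> t /=; rewrite gt_max => /andP[Tt t0].
rewrite distrC ltNge; apply/negP => et.
have : m <= g (x t) by apply: Hm; split => //=; rewrite subr0; apply: HMx; exact: ltW.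
by rewrite leNgt HT // ltW.
Qed.

Lemma lim_ge x : is_solution f x -> forall t, 0 <= t -> W xs <= W (x t).
Proof.
move=> sx t t0; rewrite leNgt; apply/negP => lt.
have := @cvg_comp _ _ _ x W _ _ _ (conv sx) (@Wc xs).
move/cvgrPdist_lt => /(_ (W xs - W (x t))); rewrite subr_gt0 => /(_ lt) [M [_ HM]].
pose s := Num.max M t + 1.
have m1 : M <= Num.max M t by rewrite le_max lexx.
have m2 : t <= Num.max M t by rewrite le_max lexx orbT.
have Ms : M < s by rewrite /s; lra.
have ts : t <= s by rewrite /s; lra.
have := HM s Ms; rewrite /= => H.
have := noninc sx t0 ts.
move: H; rewrite ltr_norml => /andP[_ h2] h3; move: h2 h3 lt. lra.
Qed.

Lemma posW z : z != xs -> W xs < W z.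
Proof.
move=> zxs; have [x [sx x0]] := ex z.
have gz : 0 < g z.
  rewrite lt_neqAle g0 andbT; apply/negP => /eqP/esym/gE zz; by rewrite zz eqxx in zxs.
have [d [d0 Hd]] := @uc x sx (g z / 2) (divr_gt0 gz (ltr0Sn _ 1)).
have dd : 0 < d / 2 by rewrite divr_gt0.
have [c /andP[c0 cd] Hc] := mvt sx (lexx 0) dd.
have : `|g (x c) - g (x 0)| < g z / 2.
  apply: Hd; [exact: ltW | exact: lexx|].
  rewrite subr0 gtr0_norm //; apply: lt_trans cd _; rewrite ltr_pdivrMr // ltr_pMr //.
  by rewrite ltr1n.
rewrite x0 ltr_norml => /andP[h1 _].
have gc2 : 0 < g (x c) by move: h1 gz; lra.
have := lim_ge sx (ltW dd).
move: Hc; rewrite x0 subr0 => Hc.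
have : 0 < g (x c) * (d / 2) by rewrite mulr_gt0.
move: Hc. lra.
Qed.


Lemma equil : f xs = 0.
Proof.
have [x [sx x0]] := ex xs.
have xc : forall t, 0 <= t -> x t = xs.
  move=> t t0; apply/eqP; apply: contraT => nx.
  have := posW nx; have := noninc sx (lexx 0) t0; rewrite x0 => h1 h2.
  by move: h1 h2; lra.
have d1 := (proj2 sx) 1 ltr01.
have ne : \forall t \near (1 : R), x t = cst xs t.
  near=> t; apply: xc.
  near: t; apply: (@filterS _ _ _ (ball (1 : R) 1)); last exact: nbhsx_ballx.
  move=> s; rewrite -ball_normE /= ltr_norml => /andP[_ h]; move: h; lra.
have := near_eq_is_derive ne d1.
rewrite xc ?ler01 // => H.
have := @derive_val _ _ _ _ _ _ _ H.
by rewrite derive_cst.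
Unshelve. all: by end_near.
Qed.

Lemma lyap : lyapunov_stable f xs.
Proof.
move=> U; rewrite inE => /nbhs_ballP [e /= e0 eU].
pose r := e / 2.
have r0 : 0 < r by rewrite divr_gt0.
pose S := [set y : V | `|y - xs| <= r] `&` [set y : V | r <= `|y - xs|].
have cS : compact S.
  apply: (@cpt _ _ _ (`|xs| + r)).
    apply: closedI; [exact: closed_normP (@closed_le _ r)| exact: closed_normP (@closed_ge _ r)].
  move=> y [/= h _]; have := ler_normD (y - xs) xs; rewrite subrK; lra.
have [m m0 Hm] : exists2 m, 0 < m & forall y, S y -> m <= W y - W xs.
  apply: pos_min => //.
    by move=> y; apply: continuousB; [exact: Wc | exact: cst_continuous].
  move=> y [/= h1 h2]; rewrite subr_gt0; apply: posW; apply/negP => /eqP yx.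
  by move: h2; rewrite yx subrr normr0 leNgt r0.
have := @Wc xs; move/cvgrPdist_lt => /(_ m m0) /nbhs_ballP [d /= d0 dH].
pose dd := Num.min d r.
have dd0 : 0 < dd by rewrite lt_min d0 r0.
have ddd : dd <= d by rewrite ge_min lexx.
have ddr : dd <= r by rewrite ge_min lexx orbT.
exists (ball xs dd).
  by rewrite inE; exact: nbhsx_ballx.
split.
  move=> y /ballN h; apply: eU; apply/ballN; move: h ddr; rewrite /r; lra.
move=> x sx /ballN hx0 t t0; apply: eU; apply/ballN; rewrite distrC.
have W0 : W (x 0) - W xs < m.
  have : ball xs d (x 0) by apply/ballN; apply: lt_le_trans hx0 ddd.
  move/dH; rewrite /= ltr_norml; lra.
suff : `|x t - xs| < r by rewrite /r; lra.
rewrite ltNge; apply/negP => rt.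
have [||c c0t xcr] := @IVT R (fun s => `|x s - xs|) 0 t r t0.
- apply: (@continuous_subspaceW _ _ `[0, t] `[0, +oo[).
    move=> s /=; rewrite !in_itv /= => /andP[h _]; by rewrite h.
  move=> s; apply: (@continuous_comp _ _ _ (x : subspace `[0, +oo[ -> V) (fun y : V => `|y - xs|) s).
    exact: (proj1 sx).
  exact: norm_sub_cont.
- rewrite /= distrC in hx0; rewrite ge_min le_max rt orbT andbT.
  by rewrite (ltW (lt_le_trans hx0 ddr)).
have Sc : S (x c) by rewrite /S /=; split; rewrite xcr.
have := Hm _ Sc.
move: c0t; rewrite in_itv /= => /andP[c0 _].
have := noninc sx (lexx 0) c0.
lra.
Qed.

End Main.

Theorem corollary2p8 (R : realType) (n : nat) (f : 'rV[R]_n -> 'rV[R]_n)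
  (V1 V2 N1 N2 : 'rV[R]_n -> R) (h : R -> R) (xs : 'rV[R]_n) :
  locally_lipschitz f ->
  C1 V1 -> C1 V2 ->
  continuous N1 -> continuous N2 ->
  (forall x, 0 <= N1 x) -> (forall x, 0 <= N2 x) ->
  {within `[0, +oo[, continuous h} ->
  (forall r, 0 <= r -> 0 <= h r) -> h 0 = 0 ->
  (exists C : R, forall r, 0 < r -> h r / r <= C) ->
  (forall x, 'd V1 x (f x) <= - N1 x) ->
  (forall x, 'd V2 x (f x) <= - N2 x + h (N1 x)) ->
  (forall x0, exists x : R -> 'rV[R]_n, is_solution f x /\ x 0 = x0) ->
  (forall x, is_solution f x -> bounded_on_pos x) ->
  (forall x, is_solution f x ->
     unif_cont_on_pos (fun t => N1 (x t)) /\ unif_cont_on_pos (fun t => N2 (x t))) ->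
  [set x | N1 x = 0 /\ N2 x = 0] = [set xs] ->
  f xs = 0 /\ globally_asymptotically_stable f xs.
Proof.
move=> _ [dV1 _] [dV2 _] cN1 cN2 N10 N20 _ h0 h00 [C HC] D1 D2 ex bnd uc E.
pose C' := Num.max C 0.
have C'0 : 0 <= C' by rewrite le_max lexx orbT.
have CC' : C <= C' by rewrite le_max lexx.
pose K := C' + 1.
pose W := V2 + K *: V1.
pose g := fun y => N1 y + N2 y.
have Wd : forall y, differentiable W y.
  by move=> y; apply: differentiableD => //; apply: differentiableZ.
have gc : continuous g by move=> y; apply: continuousD; [exact: cN1 | exact: cN2].
have g0 : forall y, 0 <= g y by move=> y; rewrite /g addr_ge0.
have hle : forall y, h (N1 y) <= C' * N1 y.
  move=> y; have := N10 y; rewrite le_eqVlt => /orP[/eqP <-|p].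
    by rewrite h00 mulr0.
  have := HC _ p; rewrite ler_pdivrMr // => H; apply: le_trans H _.
  by rewrite ler_pM2r.
have Wdec : forall y, 'd W y (f y) <= - g y.
  move=> y; rewrite /W diffD //; last exact: differentiableZ.
  rewrite diffZ //= /g.
  have := D1 y; have := D2 y; have := hle y.
  have : K * 'd V1 y (f y) <= K * (- N1 y) by rewrite ler_wpM2l // /K addr_ge0.
  rewrite /K; change ((C' + 1) *: 'd V1 y (f y)) with ((C' + 1) * 'd V1 y (f y)); lra.
have uc' : forall x, is_solution f x -> unif_cont_on_pos (fun t => g (x t)).
  move=> x sx e e0; have [u1 u2] := uc x sx.
  have [d1 [d10 H1]] := @u1 (e / 2) (divr_gt0 e0 (ltr0Sn _ 1)).
  have [d2 [d20 H2]] := @u2 (e / 2) (divr_gt0 e0 (ltr0Sn _ 1)).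
  exists (Num.min d1 d2); split; first by rewrite lt_min d10 d20.
  move=> s t s0 t0; rewrite lt_min => /andP[l1 l2].
  have := H1 _ _ s0 t0 l1; have := H2 _ _ s0 t0 l2.
  have := ler_normD (N1 (x s) - N1 (x t)) (N2 (x s) - N2 (x t)).
  rewrite /g; have -> : N1 (x s) + N2 (x s) - (N1 (x t) + N2 (x t)) =
    N1 (x s) - N1 (x t) + (N2 (x s) - N2 (x t)) by ring.
  lra.
have gE : forall y, g y = 0 -> y = xs.
  move=> y gy.
  have : [set x | N1 x = 0 /\ N2 x = 0] y.
    by move: gy (N10 y) (N20 y); rewrite /g /=; split; lra.
  by rewrite E.
split; first by apply: (equil (W:=W) (g:=g)).
split; first by apply: (lyap (W:=W) (g:=g)).
move=> x sx; by apply: (conv (W:=W) (g:=g)).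
Qed.
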